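(* Let $A=[A_1,\dots,A_n]\in\mathbb{R}^{p\times n}$ be mean-removed, i.e. $A\mathbf{1}=\mathbf{0}$, and let $\beta\doteq-\min_{i,j}(A^TA)_{ij}$. Put $\tilde A=\begin{bmatrix}\sqrt{\beta}\,\mathbf{1}^T\\ A\end{bmatrix}\in\mathbb{R}^{(p+1)\times n}$ and $W\doteq\tilde A^T\tilde A$. Let $F\in\mathbb{R}^{K\times n}$ be the class indicator matrix of the $n$ samples. If $W$ satisfies the ideal graph condition for classification, i.e. $W_{ij}=0$ for all $i,j$ with $F_i\neq F_j$, then $\sqrt{\beta n}$ is the largest singular value of $\tilde A$ and every row of $F$ lies in the span of the right singular vectors of $\tilde A$ associated with the singular value $\sqrt{\beta n}$ (in particular in the row space of $\tilde A$). Consequently zero fitting error is achieved: any minimizer $D^*$ of $\|F-D\tilde A\|_F^2$ over $D\in\mathbb{R}^{K\times(p+1)}$ satisfies $F=D^*\tilde A$.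
   Context: $\mathbf{1}$ denotes the all-ones vector. The indicator matrix $F=[F_1,\dots,F_n]$ has columns $F_i=e_k$ (the $k$th standard basis vector of $\mathbb{R}^K$) if the $i$th sample belongs to class $k$. Since $A\mathbf{1}=\mathbf{0}$ (and $A\neq 0$), $\beta>0$ and $W$ is entrywise nonnegative. Linear regression for classification (LRC) solves $\min_D\|F-D\tilde A\|_F^2$. *)

(* Defs.v *)
From HB Require Import structures.
From mathcomp Require Import all_boot all_order all_algebra.
Set Implicit Arguments. Unset Strict Implicit. Unset Printing Implicit Defensive.
Import Order.TTheory GRing.Theory Num.Theory.
Local Open Scope ring_scope.

Definition frob2 (R : rcfType) (m n : nat) (M : 'M[R]_(m, n)) : R :=
  \sum_(i < m) \sum_(j < n) M i j ^+ 2.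

Definition singular_value (R : rcfType) (m n : nat) (M : 'M[R]_(m, n)) (s : R) : Prop :=
  0 <= s /\ exists (u : 'cV[R]_m) (v : 'cV[R]_n),
    u^T *m u = 1%:M /\ v^T *m v = 1%:M /\ M *m v = s *: u /\ M^T *m u = s *: v.

Definition largest_singular_value (R : rcfType) (m n : nat) (M : 'M[R]_(m, n)) (s : R) : Prop :=
  singular_value M s /\ forall t, singular_value M t -> t <= s.

Definition right_singular_vector (R : rcfType) (m n : nat) (M : 'M[R]_(m, n)) (s : R)
  (v : 'cV[R]_n) : Prop :=
  0 <= s /\ v^T *m v = 1%:M /\ exists u : 'cV[R]_m,
    u^T *m u = 1%:M /\ M *m v = s *: u /\ M^T *m u = s *: v.

Definition in_right_singular_span (R : rcfType) (m n : nat) (M : 'M[R]_(m, n)) (s : R)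
  (x : 'cV[R]_n) : Prop :=
  exists (r : nat) (c : 'I_r -> R) (V : 'I_r -> 'cV[R]_n),
    (forall t, right_singular_vector M s (V t)) /\ x = \sum_(t < r) c t *: V t.

Definition augment (R : rcfType) (p n : nat) (beta : R) (A : 'M[R]_(p, n)) : 'M[R]_(1 + p, n) :=
  col_mx (Num.sqrt beta *: const_mx 1) A.

Definition indicator (R : rcfType) (K n : nat) (y : 'I_n -> 'I_K) : 'M[R]_(K, n) :=
  \matrix_(k < K, i < n) (y i == k)%:R.

(* Main.v *)
Require Import Defs.
From HB Require Import structures.
From mathcomp Require Import all_boot all_order all_algebra.
From mathcomp Require Import ring lra.
Import Order.TTheory GRing.Theory Num.Theory.
Local Open Scope ring_scope.
Set Implicit Arguments.

Lemma W_formula (R : rcfType) (p n : nat) (A : 'M[R]_(p, n)) (beta : R) :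
  0 <= beta ->
  (augment beta A)^T *m augment beta A = beta *: const_mx 1 + A^T *m A.
Proof.
move=> hb; rewrite /augment tr_col_mx mul_row_col; congr (_ + _).
apply/matrixP=> i j; rewrite !mxE big_ord1 !mxE.
by rewrite !mulr1 -expr2 sqr_sqrtr.
Qed.

Lemma tmx_sq (R : rcfType) (n : nat) (x : 'cV[R]_n) :
  x^T *m x = (\sum_i x i 0 ^+ 2)%:M.
Proof.
apply/matrixP=> i j; rewrite !mxE (ord1 i) (ord1 j) eqxx mulr1n.
by apply: eq_bigr => k _; rewrite mxE expr2.
Qed.

Lemma rsv (R : rcfType) (m n : nat) (M : 'M[R]_(m, n)) (s : R) (v : 'cV[R]_n) :
  0 < s -> v^T *m v = 1%:M -> M^T *m M *m v = (s ^+ 2) *: v ->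
  right_singular_vector M s v.
Proof.
move=> s0 hv hW; split; first exact: ltW.
split=> //; exists (s^-1 *: (M *m v)); split; last split.
- rewrite linearZ /= [(_ *: _)^T]linearZ /= -scalemxAl scalerA trmx_mul -mulmxA [M^T *m _]mulmxA hW.
  rewrite -scalemxAr hv scalerA scalemx1; congr (_%:M).
  by field; rewrite gt_eqF.
- by rewrite scalerA mulfV ?gt_eqF // scale1r.
- by rewrite -scalemxAr mulmxA hW scalerA expr2 mulrA mulVf ?gt_eqF // mul1r.
Qed.

Lemma ATA_row0 (R : rcfType) (p n : nat) (A : 'M[R]_(p, n)) :
  A *m (const_mx 1 : 'cV[R]_n) = 0 -> forall i, \sum_j (A^T *m A) i j = 0.
Proof.
move=> hA i.
have h1 l : \sum_j A l j = 0.
  have e : (A *m (const_mx 1 : 'cV[R]_n)) l 0 = 0 by rewrite hA mxE.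
  rewrite mxE in e; apply: etrans e; apply: esym.
  by apply: eq_bigr => j _; rewrite mxE mulr1.
under eq_bigr do rewrite mxE.
rewrite exchange_big /= big1 // => l _.
under eq_bigr do rewrite mxE.
by rewrite -big_distrr /= h1 mulr0.
Qed.

Lemma normv (R : rcfType) (m n : nat) (M : 'M[R]_(m, n)) (s : R) (x : 'cV[R]_n) :
  x != 0 -> 0 < s -> M^T *m M *m x = (s ^+ 2) *: x ->
  exists c v, right_singular_vector M s v /\ x = c *: v.
Proof.
move=> hx s0 hW.
set q := \sum_i x i 0 ^+ 2.
have q0 : 0 < q.
  rewrite lt_def sumr_ge0 ?andbT => [|i _]; last exact: sqr_ge0.
  apply/negP => /eqP q0; move/negP: hx; apply; apply/eqP/matrixP => i j.
  rewrite (ord1 j) mxE; apply/eqP; rewrite -sqrf_eq0; apply/eqP.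
  by apply: (psumr_eq0P _ q0) => // k _; exact: sqr_ge0.
have c0 : 0 < Num.sqrt q by rewrite sqrtr_gt0.
exists (Num.sqrt q), ((Num.sqrt q)^-1 *: x); split; last first.
  by rewrite scalerA mulfV ?gt_eqF // scale1r.
apply: rsv => //.
  rewrite linearZ /= [(_ *: _)^T]linearZ /= -scalemxAl scalerA tmx_sq -/q.
  rewrite scale_scalar_mx; congr (_%:M).
  rewrite -invfM -expr2 sqr_sqrtr ?ltW // mulVf // gt_eqF //.
by rewrite -scalemxAr hW !scalerA mulrC.
Qed.

Lemma quad_bound (R : rcfType) (n : nat) (W : 'M[R]_n) (b : R) (x : 'cV[R]_n) :
  (forall i j, W i j = W j i) -> (forall i j, 0 <= W i j) ->
  (forall i, \sum_j W i j = b) ->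
  (x^T *m (W *m x)) 0 0 <= b * \sum_i x i 0 ^+ 2.
Proof.
move=> Ws Wn Wr.
have E1 : \sum_i \sum_j W i j * x i 0 ^+ 2 = b * \sum_i x i 0 ^+ 2.
  rewrite big_distrr; apply: eq_bigr => i _ /=.
  by rewrite -big_distrl /= Wr.
have E2 : \sum_i \sum_j W i j * x j 0 ^+ 2 = b * \sum_i x i 0 ^+ 2.
  rewrite exchange_big big_distrr; apply: eq_bigr => i _ /=.
  under eq_bigr do rewrite Ws.
  by rewrite -big_distrl /= Wr.
have L : (x^T *m (W *m x)) 0 0 = \sum_i \sum_j W i j * x i 0 * x j 0.
  rewrite mxE; apply: eq_bigr => i _; rewrite !mxE big_distrr.
  by apply: eq_bigr => j _ /=; ring.
have H : 2 * \sum_i \sum_j W i j * x i 0 * x j 0 <=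
    \sum_i \sum_j W i j * x i 0 ^+ 2 + \sum_i \sum_j W i j * x j 0 ^+ 2.
  rewrite mulr_sumr -big_split /=; apply: ler_sum => i _.
  rewrite mulr_sumr -big_split /=; apply: ler_sum => j _.
  have := mulr_ge0 (Wn i j) (sqr_ge0 (x i 0 - x j 0)). nra.
rewrite L; move: H; rewrite E1 E2.
set a := \sum_i _; set c := b * _; lra.
Qed.

Unset Implicit Arguments.

Theorem theorem1 (R : rcfType) (p n K : nat) (A : 'M[R]_(p, n)) (beta : R)
    (y : 'I_n -> 'I_K) :
  A *m (const_mx 1 : 'cV[R]_n) = 0 ->
  A != 0 ->
  (* beta = - min_{i,j} (A^T A)_{ij} *)
  (exists i j, (A^T *m A) i j = - beta) ->
  (forall i j, - beta <= (A^T *m A) i j) ->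
  let At := augment beta A in
  let W := At^T *m At in
  let F := indicator R y in
  (* ideal graph condition *)
  (forall i j, col i F != col j F -> W i j = 0) ->
  largest_singular_value At (Num.sqrt (beta * n%:R))
  /\ (forall k : 'I_K, in_right_singular_span At (Num.sqrt (beta * n%:R)) (row k F)^T)
  /\ (F <= At)%MS
  /\ (forall Dstar : 'M[R]_(K, 1 + p),
        (forall D : 'M[R]_(K, 1 + p), frob2 (F - Dstar *m At) <= frob2 (F - D *m At)) ->
        F = Dstar *m At).
Proof.
move=> hA hA0 _ hmin At W F hcl.
have hrow := ATA_row0 hA.
have n0 : (0 < n)%N.
  case: (posnP n) => // n0; exfalso; move/negP: hA0; apply; apply/eqP/matrixP => i j.
  by have := ltn_ord j; rewrite [X in (_ < X)%N]n0.
have b0 : 0 < beta.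
  rewrite ltNge; apply/negP => hb.
  have nn i j : 0 <= (A^T *m A) i j by apply: le_trans (hmin i j); rewrite oppr_ge0.
  move/negP: hA0; apply; apply/eqP/matrixP => l i; rewrite mxE.
  have d : (A^T *m A) i i = 0 by apply: (psumr_eq0P _ (hrow i)) => // j _.
  move: d; rewrite mxE => d; apply/eqP; rewrite -sqrf_eq0; apply/eqP.
  have d' : \sum_j A j i ^+ 2 = 0 by apply: etrans d; apply: eq_bigr => j _; rewrite mxE expr2.
  by apply: (psumr_eq0P _ d') => // k _; exact: sqr_ge0.
set bn := beta * n%:R.
have bn0 : 0 < bn by rewrite mulr_gt0 // ltr0n.
set s := Num.sqrt bn.
have s0 : 0 < s by rewrite sqrtr_gt0.
have s2 : s ^+ 2 = bn by rewrite sqr_sqrtr // ltW.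
have WE i j : W i j = beta + (A^T *m A) i j.
  by rewrite /W /At W_formula ?ltW // !mxE mulr1.
have Ws i j : W i j = W j i.
  by rewrite !WE !mxE; congr (_ + _); apply: eq_bigr => l _; rewrite !mxE mulrC.
have Wn i j : 0 <= W i j by have := hmin i j; rewrite WE; lra.
have Wr i : \sum_j W i j = bn.
  under eq_bigr do rewrite WE.
  by rewrite big_split /= hrow addr0 sumr_const card_ord -mulr_natr.
have Wc i j : y i != y j -> W i j = 0.
  move=> h; apply: hcl; apply/negP => /eqP/matrixP/(_ (y i) 0).
  by rewrite !mxE eqxx eq_sym (negbTE h) => /eqP; rewrite oner_eq0.
have core i k : \sum_j W i j * (y j == k)%:R = bn * (y i == k)%:R.
  case: (eqVneq (y i) k) => hik.
    rewrite mulr1 -(Wr i); apply: eq_bigr => j _.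
    case: (eqVneq (y j) k) => hjk; first by rewrite mulr1.
    by rewrite Wc ?mul0r // hik eq_sym.
  rewrite mulr0 big1 // => j _.
  case: (eqVneq (y j) k) => hjk; last by rewrite mulr0.
  by rewrite Wc ?mul0r // hjk.
have WF k : At^T *m At *m (row k F)^T = s ^+ 2 *: (row k F)^T.
  rewrite s2; apply/matrixP=> i z; rewrite (ord1 z) !mxE -core.
  by apply: eq_bigr => j _; rewrite !mxE.
have W1 : At^T *m At *m (const_mx 1 : 'cV[R]_n) = s ^+ 2 *: const_mx 1.
  rewrite s2; apply/matrixP=> i z; rewrite !mxE mulr1 -(Wr i).
  by apply: eq_bigr => j _; rewrite !mxE mulr1.
have FW : F *m W = bn *: F.
  apply/matrixP=> k i; rewrite mxE [in RHS]mxE [in RHS]mxE -core.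
  by apply: eq_bigr => j _; rewrite Ws mulrC; congr (_ * _); rewrite /F mxE.
have FD : F = (bn^-1 *: (F *m At^T)) *m At.
  by rewrite -scalemxAl -mulmxA -/W FW scalerA mulVf ?gt_eqF // scale1r.
split; last split; last split.
- split.
    split; first exact: ltW.
    have hx1 : (const_mx 1 : 'cV[R]_n) != 0.
      apply/negP => /eqP/matrixP/(_ (Ordinal n0) 0); rewrite !mxE => /eqP.
      by rewrite oner_eq0.
    have [c [v [[_ [hv [u [hu [h1 h2]]]]] _]]] := @normv _ _ _ At s _ hx1 s0 W1.
    by exists u, v.
  move=> t [t0 [u [v [hu [hv [h1 h2]]]]]].
  have Wv : W *m v = t ^+ 2 *: v.
    by rewrite /W -mulmxA h1 -scalemxAr h2 scalerA expr2.
  have := @quad_bound _ _ W bn v Ws Wn Wr.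
  have hq : \sum_i v i 0 ^+ 2 = 1.
    by move: hv; rewrite tmx_sq => /matrixP/(_ 0 0); rewrite !mxE eqxx !mulr1n.
  rewrite Wv -scalemxAr hv hq !mxE eqxx mulr1n !mulr1 -s2 => h.
  by move: h t0 s0; set w := s; nra.
- move=> k; case: (eqVneq (row k F)^T 0) => hx.
    exists 0%N, (fun _ => 0), (fun _ => 0); split; first by case.
    by rewrite hx big_ord0.
  have [c [v [hv e]]] := @normv _ _ _ At s _ hx s0 (WF k).
  exists 1%N, (fun _ => c), (fun _ => v); split => //.
  by rewrite big_ord1.
- by rewrite FD submxMl.
- move=> Ds hD.
  have f0 : forall M : 'M[R]_(K, n), 0 <= frob2 M.
    by move=> M; apply: sumr_ge0 => i _; apply: sumr_ge0 => j _; exact: sqr_ge0.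
  have z : frob2 (F - Ds *m At) = 0.
    apply/eqP; rewrite eq_le f0 andbT.
    apply: le_trans (hD (bn^-1 *: (F *m At^T))) _.
    rewrite -FD subrr /frob2 big1 // => i _; rewrite big1 // => j _.
    by rewrite mxE expr2 mulr0.
  apply/eqP; rewrite -subr_eq0; apply/eqP/matrixP => i j; rewrite [in RHS]mxE.
  apply/eqP; rewrite -sqrf_eq0; apply/eqP.
  have zi := psumr_eq0P (fun i _ => sumr_ge0 _ (fun j _ => sqr_ge0 _)) z (i := i) isT.
  exact: (psumr_eq0P (fun j _ => sqr_ge0 _) zi (i := j) isT).
Qed.
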